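(* Let $A$ and $B$ be finite-dimensional Hilbert spaces. For any $\sigma\in\mathrm{S}(A)$, any $\rho\in\mathrm{S}_\sigma(A)$ and any $\mathcal{N}\in\mathrm{TPCP}(A,B)$, the function $\mathrm{TPCP}(B,A)\ni\mathcal{T}\mapsto\Delta_{\mathcal{T},\sigma,\mathcal{N}}(\rho)$, where \[ \Delta_{\mathcal{T},\sigma,\mathcal{N}}(\rho):=D(\rho\|\sigma)-D\bigl(\mathcal{N}(\rho)\|\mathcal{N}(\sigma)\bigr)-D_{\mathbb{M}}\bigl(\rho\,\|\,(\mathcal{T}\circ\mathcal{N})(\rho)\bigr), \] is upper semicontinuous.
   Context: $\mathrm{S}(A)$: density operators on $A$; $\mathrm{TPCP}(A,B)$: quantum channels from $A$ to $B$. $\mathrm{S}_\sigma(A):=\{\rho\in\mathrm{S}(A):\mathrm{supp}(\rho)\subseteq\mathrm{supp}(\sigma)\}$. $D(\rho\|\sigma):=\mathrm{tr}(\rho(\log\rho-\log\sigma))$ if $\mathrm{supp}(\rho)\subseteq\mathrm{supp}(\sigma)$, $+\infty$ otherwise. $D_{\mathbb{M}}(\rho\|\tau):=\sup D(\mathcal{M}(\rho)\|\mathcal{M}(\tau))$ over all finite POVMs $\{M_x\}$ with $\mathcal{M}(\omega)=\sum_x\mathrm{tr}(\omega M_x)|x\rangle\langle x|$. *)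

(* Defs.v *)
From mathcomp Require Import all_boot all_order all_algebra.
From mathcomp Require Import complex.
From mathcomp Require Import Rstruct.
From mathcomp Require Import classical_sets constructive_ereal ereal.
From Stdlib Require Import Rpower.

Set Implicit Arguments.
Unset Strict Implicit.
Unset Printing Implicit Defensive.

Import Order.TTheory GRing.Theory Num.Theory.
Local Open Scope ring_scope.
Local Open Scope complex_scope.

Notation R := Rdefinitions.R.
Notation C := (complex R).

Definition mx_adj (p q : nat) (A : 'M[C]_(p, q)) : 'M[C]_(q, p) :=
  (map_mx Num.conj A)^T.

(** Positive semidefinite: <v, A v> >= 0 for all vectors v
    (in the order of C this means "real and nonnegative"). *)
Definition psd (n : nat) (A : 'M[C]_n) : Prop :=
  forall v : 'cV[C]_n, 0 <= (mx_adj v *m A *m v) 0 0.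

Definition density (n : nat) (rho : 'M[C]_n) : Prop :=
  psd rho /\ \tr rho = 1.

(** supp(rho) ⊆ supp(sigma), the support being the range (column space). *)
Definition supp_le (n : nat) (rho sigma : 'M[C]_n) : bool :=
  (rho^T <= sigma^T)%MS.

Definition spectral_dec (n : nat) (A : 'M[C]_n) (Ud : 'M[C]_n * 'rV[R]_n) : Prop :=
  Ud.1 *m mx_adj Ud.1 = 1%:M /\
  A = Ud.1 *m diag_mx (map_mx (fun x : R => x%:C) Ud.2) *m mx_adj Ud.1.

(** Matrix logarithm of a positive semidefinite matrix, taken on its support
    (eigenvalue 0 is mapped to 0), via a chosen spectral decomposition. *)
Definition log_mx (n : nat) (A : 'M[C]_n) : 'M[C]_n :=
  let Ud := xget (1%:M, 0) [set Ud | spectral_dec A Ud] in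
  Ud.1 *m diag_mx (\row_i (if (0 < Ud.2 0 i)%R then ln (Ud.2 0 i) else 0%R)%:C)
       *m mx_adj Ud.1.

Definition relent (n : nat) (rho sigma : 'M[C]_n) : \bar R :=
  if supp_le rho sigma
  then ((@complex.Re R (\tr (rho *m (log_mx rho - log_mx sigma)))) %:E)%E
  else (+oo)%E.

Definition is_povm (n k : nat) (M : 'I_k -> 'M[C]_n) : Prop :=
  (forall x, psd (M x)) /\ \sum_(x < k) M x = 1%:M.

Definition meas_channel (n k : nat) (M : 'I_k -> 'M[C]_n) (omega : 'M[C]_n)
  : 'M[C]_k := diag_mx (\row_x \tr (omega *m M x)).

Definition measured_relent (n : nat) (rho tau : 'M[C]_n) : \bar R :=
  ereal_sup [set r : \bar R | exists (k : nat) (M : 'I_k -> 'M[C]_n),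
     is_povm M /\ r = relent (meas_channel M rho) (meas_channel M tau)].

(** Quantum channels TPCP(C^n, C^m): linear, trace preserving, and
    completely positive (id_k ⊗ T preserves positivity for every k; an
    operator on C^k ⊗ C^n is written as a k x k block matrix). *)
Definition is_channel (n m : nat) (T : 'M[C]_n -> 'M[C]_m) : Prop :=
  [/\ (forall (a : C) (X Y : 'M[C]_n), T (a *: X + Y) = a *: T X + T Y),
      (forall X : 'M[C]_n, \tr (T X) = \tr X) &
      (forall (k : nat) (X : 'I_k -> 'I_k -> 'M[C]_n),
          psd (\mxblock_(i < k, j < k) X i j) ->
          psd (\mxblock_(i < k, j < k) T (X i j)))].

Definition Delta (dA dB : nat) (T : 'M[C]_dB -> 'M[C]_dA) (sigma : 'M[C]_dA)
    (N : 'M[C]_dA -> 'M[C]_dB) (rho : 'M[C]_dA) : \bar R :=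
  (relent rho sigma - relent (N rho) (N sigma)
   - measured_relent rho (T (N rho)))%E.

(** Upper semicontinuity of f on the set TPCP(C^m, C^n) of channels, w.r.t.
    the (finite-dimensional, norm) topology of linear maps: distances are
    measured by the entries of the images of the matrix units E_ij. *)
Definition usc_on_channels (m n : nat) (f : ('M[C]_m -> 'M[C]_n) -> \bar R)
  : Prop :=
  forall T0, is_channel T0 ->
  forall c : R, (f T0 < c%:E)%E ->
  exists2 delta : R, (0 < delta)%R &
    forall T, is_channel T ->
      (forall (i j : 'I_m) (k l : 'I_n),
          `|T (delta_mx i j) k l - T0 (delta_mx i j) k l| < delta%:C) ->
      (f T < c%:E)%E.

(* Main.v *)
Require Import Defs.
From mathcomp Require Import all_boot all_order all_algebra.
From mathcomp Require Import complex spectral sesquilinear.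
From mathcomp Require Import Rstruct.
From mathcomp Require Import classical_sets constructive_ereal ereal.
From mathcomp Require Import algebra_tactics.ring lra.
From Stdlib Require Import Rpower Rtrigo_def Exp_prop.
Set Implicit Arguments.
Unset Strict Implicit.
Unset Printing Implicit Defensive.
Import Order.TTheory GRing.Theory Num.Theory.
Local Open Scope ring_scope.
Local Open Scope sesquilinear_scope.
Section Herm.
Variable K : numClosedFieldType.

Lemma cjD (x y : K) : (x + y)^* = x^* + y^*. Proof. exact: rmorphD. Qed.
Lemma cjM (x y : K) : (x * y)^* = x^* * y^*. Proof. exact: rmorphM. Qed.
Lemma cjB (x y : K) : (x - y)^* = x^* - y^*. Proof. exact: rmorphB. Qed.
Lemma cjN (x : K) : (- x)^* = - x^*. Proof. exact: rmorphN. Qed.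

Lemma conj_pol (a b : K) : a^* + b^* = a + b ->
  - 'i * (a^* - b^*) = 'i * (a - b) -> a^* = b.
Proof.
move=> H1 H2.
have H3 : a^* - b^* = b - a.
  have := congr1 (fun z => 'i * z) H2.
  rewrite !mulrA mulrN mulCii mulN1r opprK mul1r => ->.
  by rewrite opprB.
have -> : a^* = ((a^* + b^*) + (a^* - b^*)) / 2%:R by field.
rewrite H1 H3.
by field.
Qed.

Lemma pol2 (I x a b a' b' w : K) :
  x + - I * a' + (- - I * b' + - - I * (- I * w)) - x - w =
  x + I * a + (- I * b + - I * (I * w)) - x - w ->
  - I * (a' - b') = I * (a - b).
Proof.
move=> H.
have e1 : - I * (a' - b') =
  (x + - I * a' + (- - I * b' + - - I * (- I * w)) - x - w) + I * I * w + w by ring.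
rewrite e1 H; ring.
Qed.

Definition qf n (B : 'M[K]_n) (u v : 'cV[K]_n) : K := ((u ^t*) *m B *m v) 0 0.

Lemma qfDl n (B : 'M[K]_n) u1 u2 v : qf B (u1 + u2) v = qf B u1 v + qf B u2 v.
Proof. by rewrite /qf linearD map_mxD !mulmxDl mxE. Qed.
Lemma qfDr n (B : 'M[K]_n) u v1 v2 : qf B u (v1 + v2) = qf B u v1 + qf B u v2.
Proof. by rewrite /qf mulmxDr mxE. Qed.
Lemma qfZl n (B : 'M[K]_n) c u v : qf B (c *: u) v = c^* * qf B u v.
Proof. by rewrite /qf linearZ map_mxZ /= -!scalemxAl mxE. Qed.
Lemma qfZr n (B : 'M[K]_n) c u v : qf B u (c *: v) = c * qf B u v.
Proof. by rewrite /qf -!scalemxAr mxE. Qed.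

Lemma qf_delta n (B : 'M[K]_n) i j : qf B (delta_mx i 0) (delta_mx j 0) = B i j.
Proof.
rewrite /qf /= trmx_delta.
have -> : (delta_mx 0 i : 'rV[K]_n) ^ Num.conj = delta_mx 0 i.
  by apply/matrixP => a b; rewrite !mxE; case: (_ && _); rewrite ?conjC1 ?conjC0.
by rewrite -rowE -colE !mxE.
Qed.

Lemma herm_of n (B : 'M[K]_n) : (forall v, (qf B v v) \is Num.real) ->
  forall i j, (B j i)^* = B i j.
Proof.
move=> hr i j.
set u := delta_mx j 0 : 'cV[K]_n; set v := delta_mx i 0 : 'cV[K]_n.
rewrite -!qf_delta -/u -/v.
have /CrealP Hu := hr u; have /CrealP Hv := hr v.
apply: conj_pol.
  have /CrealP := hr (u + v); rewrite qfDl !qfDr !cjD Hu Hv.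
  move/(congr1 (fun z => z - qf B u u - qf B v v)).
  have E z1 z2 z3 z4 : z1 + z2 + (z3 + z4) - z1 - z4 = z2 + z3 :> K by ring.
  by rewrite !E.
have /CrealP := hr (u + 'i *: v); rewrite qfDl !qfDr !qfZl !qfZr.
rewrite !(cjD, cjM, conjCi, cjN, conjCK) Hu Hv.
move/(congr1 (fun z => z - qf B u u - qf B v v)).
exact: pol2.
Qed.

Lemma qf_mul n (M Q : 'M[K]_n) (u v : 'cV[K]_n) :
  qf M (Q *m u) (Q *m v) = qf (Q^t* *m M *m Q) u v.
Proof. by rewrite /qf trmx_mul map_mxM !mulmxA. Qed.

Lemma tr_psd n (A B : 'M[K]_n) : (forall v, 0 <= qf A v v) ->
  (forall v, 0 <= qf B v v) -> 0 <= \tr (A *m B).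
Proof.
move=> hA hB.
have hBh := herm_of (fun v => ger0_real (hB v)).
have Bh : B^t* = B by apply/matrixP => i j; rewrite !mxE hBh.
have Bn : B \is normalmx by apply/normalmxP; rewrite Bh.
have := Bn => /orthomx_spectralP.
set P := spectralmx B; set d := spectral_diag B => BE.
have Pu : P \is unitarymx by apply: spectral_unitarymx.
rewrite invmx_unitary // in BE.
have PP : P *m P^t* = 1%:M by apply/unitarymxP.
have PP' : P^t* *m P = 1%:M by apply: mulmx1C.
have diagE : P *m B *m P^t* = diag_mx d.
  by rewrite BE !mulmxA PP mul1mx -mulmxA PP mulmx1.
have key : forall M : 'M[K]_n, (forall v, 0 <= qf M v v) ->
    forall i, 0 <= (P *m M *m P^t*) i i.
  move=> M hM i; rewrite -qf_delta -[X in qf (X *m _ *m _)](trmxCK P) -qf_mul.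
  exact: hM.
rewrite BE mulmxA mxtrace_mulC !mulmxA.
rewrite -[P *m A *m P^t*]/(P *m A *m P^t*).
rewrite mul_mx_diag /mxtrace; apply: sumr_ge0 => i _; rewrite mxE.
apply: mulr_ge0; first exact: key.
have := key B hB i; rewrite diagE !mxE eqxx mulr1n //.
Qed.
End Herm.

Lemma ln_sub1 (x : R) : 0 < x -> ln x <= x - 1.
Proof.
move=> /RltP h; have /RleP := exp_ineq1_le (ln x).
by rewrite exp_ln // RplusE R1E => H; lra.
Qed.

Lemma ln_diff (t Q : R) : 0 < t -> 0 < Q -> ln t - ln Q <= (t - Q) / Q.
Proof.
move=> ht hQ.
have hq : 0 < t / Q by apply: divr_gt0.
have := ln_sub1 hq.
have -> : ln (t / Q) = ln t - ln Q.
  rewrite -RdivE /Rdefinitions.Rdiv ln_mult; last by apply/RltP; rewrite RinvE invr_gt0.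
    by rewrite ln_Rinv //; apply/RltP.
  by apply/RltP.
move=> H; apply: (le_trans H); rewrite lerBlDr mulrBl divff ?gt_eqF //.
by rewrite subrK.
Qed.

Lemma ln_lt (x y : R) : 0 < x -> x < y -> ln x < ln y.
Proof. by move=> /RltP hx /RltP hxy; apply/RltP; apply: ln_increasing. Qed.

Lemma ln_expR (x : R) : ln (exp x) = x.
Proof. exact: ln_exp. Qed.

Lemma exp_gt0 (x : R) : 0 < exp x.
Proof. by apply/RltP; apply: exp_pos. Qed.

Local Open Scope complex_scope.
Definition l0 (r : R) : R := if (0 < r)%R then ln r else 0%R.
Definition dg k (p : 'I_k -> R) : 'M[C]_k := diag_mx (\row_x (p x)%:C).

Lemma adjE m n (A : 'M[C]_(m, n)) : mx_adj A = A ^t* .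
Proof. by rewrite /mx_adj map_trmx. Qed.

Lemma log_dg k (p : 'I_k -> R) : log_mx (dg p) = dg (fun x => l0 (p x)).
Proof.
rewrite /log_mx.
set Ud := xget _ _.
have : spectral_dec (dg p) Ud.
  apply: xgetPex; exists (1%:M, \row_x p x); split => /=.
    by rewrite adjE trmx1 map_mx1 mulmx1.
  rewrite adjE trmx1 map_mx1 mulmx1 mul1mx /dg; congr diag_mx.
  by apply/rowP => x; rewrite !mxE.
case: Ud => U e [/= UU dgE].
have UU' : mx_adj U *m U = 1%:M by apply: mulmx1C.
have comm : forall f : R -> R,
  U *m diag_mx (map_mx (fun x : R => (f x)%:C) e) =
  diag_mx (\row_x (f (p x))%:C) *m U.
  move=> f.
  have AU : dg p *m U = U *m diag_mx (map_mx (fun x : R => x%:C) e).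
    by rewrite dgE -!mulmxA UU' mulmx1.
  apply/matrixP => i j; rewrite mul_mx_diag mul_diag_mx !mxE.
  have /matrixP/(_ i j) := AU.
  rewrite mul_mx_diag /dg mul_diag_mx !mxE => h.
  have [->|Uij] := eqVneq (U i j) 0; first by rewrite !mul0r mulr0.
  have : (p i)%:C = (e 0 j)%:C.
    by apply: (mulIf Uij); rewrite h mulrC.
  by case=> ->; rewrite mulrC.
have -> : U *m diag_mx (\row_i (if (0 < e 0 i)%R then ln (e 0 i) else 0%R)%:C)
   = U *m diag_mx (map_mx (fun x : R => (l0 x)%:C) e).
  by congr (_ *m diag_mx _); apply/rowP => x; rewrite !mxE.
by rewrite comm -mulmxA UU mulmx1.
Qed.

Definition fcl k (p q : 'I_k -> R) : \bar R :=
  if [forall x, (p x != 0) ==> (q x != 0)]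
  then ((\sum_x p x * (l0 (p x) - l0 (q x)))%:E)%E else (+oo)%E.

Lemma supp_dg k (p q : 'I_k -> R) :
  supp_le (dg p) (dg q) = [forall x, (p x != 0) ==> (q x != 0)].
Proof.
rewrite /supp_le /dg !tr_diag_mx.
apply/idP/forallP => [/submxP [D hD] x|h].
  apply/implyP => px; apply: contraNneq px => qx.
  have /matrixP/(_ x x) := hD.
  rewrite mul_mx_diag !mxE eqxx qx mulr0 /= mulr1n.
  by move/(congr1 (@complex.Re _)) => /= ->.
apply/submxP. pose D : 'M[C]_k := diag_mx (\row_(x < k) ((p x)%:C / (q x)%:C)). exists D.
apply/matrixP => i j; rewrite mul_mx_diag !mxE.
have [->|ij] := eqVneq i j; last by rewrite mulr0n mul0r.
rewrite !mulr1n; have := h j; have [->|qj] := eqVneq (q j) 0.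
  by rewrite /= implybF negbK; move=> /eqP ->; rewrite mulr0.
move=> _; rewrite -mulrA mulVf ?mulr1 //.
by apply: contra qj => /eqP /(congr1 (@complex.Re _)) /= ->.
Qed.

Lemma relent_dg k (p q : 'I_k -> R) : relent (dg p) (dg q) = fcl p q.
Proof.
rewrite /relent supp_dg /fcl; case: ifP => // _.
rewrite !log_dg /dg -linearB /=.
have -> : diag_mx (\row_x (p x)%:C) *m diag_mx (\row_x (l0 (p x))%:C - \row_x (l0 (q x))%:C)
   = diag_mx (\row_x (p x * (l0 (p x) - l0 (q x)))%:C) :> 'M[C]_k.
  apply/matrixP => i j; rewrite mul_diag_mx !mxE.
  have [->|ij] := eqVneq i j; last by rewrite !mulr0n mulr0.
  by rewrite !mulr1n rmorphM rmorphB.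
rewrite mxtrace_diag.
have -> : \sum_j (\row_x (p x * (l0 (p x) - l0 (q x)))%:C) 0 j
   = (\sum_x (p x * (l0 (p x) - l0 (q x))))%:C :> C.
  by rewrite rmorph_sum; apply: eq_bigr => x _; rewrite mxE.
by [].
Qed.
Lemma fin_delta (I : finType) (P : I -> R -> Prop) :
  (forall i d d', 0 < d' -> d' <= d -> P i d -> P i d') ->
  (forall i, exists2 d, 0 < d & P i d) -> exists2 d, 0 < d & forall i, P i d.
Proof.
move=> mono ex.
suff [d d0 hd] : exists2 d, 0 < d & forall i, i \in enum I -> P i d.
  by exists d => // i; apply: hd; rewrite mem_enum.
elim: (enum I) => [|x s [d1 d10 h1]]; first by exists 1.
have [d2 d20 h2] := ex x.
exists (Num.min d1 d2); first by rewrite lt_min d10.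
move=> i; rewrite inE => /orP [/eqP ->|/h1 hi].
  by apply: mono h2; rewrite ?lt_min ?d10 // ge_min lexx orbT.
by apply: mono hi; rewrite ?lt_min ?d10 // ge_min lexx.
Qed.

Lemma caseA_term (p Q e : R) : 0 <= p -> 0 <= Q -> (p != 0 -> Q != 0) -> 0 < e ->
  exists2 d, 0 < d & forall t, 0 <= t -> `|t - Q| < d ->
    (0 < p -> 0 < t) /\ p * (l0 p - l0 Q) - e < p * (l0 p - l0 t).
Proof.
move=> hp hQ hpQ he.
have [->|pn0] := eqVneq p 0.
  exists 1 => // t _ _; split; first by rewrite ltxx.
  by rewrite !mul0r; lra.
have p0 : 0 < p by rewrite lt_def pn0.
have Q0 : 0 < Q by rewrite lt_def hpQ.
have eQp : 0 < e * Q / p by apply: divr_gt0 => //; apply: mulr_gt0.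
exists (Num.min Q (e * Q / p)); first by rewrite lt_min Q0.
move=> t ht; rewrite lt_min => /andP [h1 h2].
have t0 : 0 < t by move: h1; rewrite ltr_distl => /andP [h _]; lra.
split => [//|].
rewrite /l0 t0 Q0.
have hl := ln_diff t0 Q0.
have hr : t - Q < e * Q / p by move: h2; rewrite ltr_distl => /andP [_ h]; lra.
have hq : (t - Q) / Q < e / p.
  rewrite ltr_pdivrMr // mulrAC; exact: hr.
have : p * (ln t - ln Q) < e.
  apply: (le_lt_trans (ler_wpM2l (ltW p0) hl)).
  by rewrite mulrC -ltr_pdivlMr.
lra.
Qed.

Lemma fcl_lsc k (p Q : 'I_k -> R) (a : R) :
  (forall x, 0 <= p x) -> (forall x, 0 <= Q x) -> (a%:E < fcl p Q)%E ->
  exists2 d : R, 0 < d & forall q : 'I_k -> R, (forall x, 0 <= q x) ->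
    (forall x, `|q x - Q x| < d) -> (a%:E < fcl p q)%E.
Proof.
move=> hp hQ; rewrite /fcl; case: ifP => suppQ.
  rewrite lte_fin => hS.
  set S0 := \sum_x _ in hS.
  set e := (S0 - a) / (k%:R + 1).
  have k1 : 0 < k%:R + 1 :> R by rewrite ltr_wpDl.
  have e0 : 0 < e by apply: divr_gt0 => //; rewrite subr_gt0.
  have eE : e * (k%:R + 1) = S0 - a by rewrite /e mulfVK ?gt_eqF.
  have [d d0 hd] := @fin_delta _ (fun x d => forall t, 0 <= t -> `|t - Q x| < d ->
    (0 < p x -> 0 < t) /\ p x * (l0 (p x) - l0 (Q x)) - e < p x * (l0 (p x) - l0 t))
    (fun i d d' d'0 dd' h t t0 ht => h t t0 (lt_le_trans ht dd'))
    (fun x => caseA_term (hp x) (hQ x) (implyP (forallP suppQ x)) e0).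
  exists d => // q hq hqQ.
  have suppq : [forall x, (p x != 0) ==> (q x != 0)].
    apply/forallP => x; apply/implyP => px.
    have p0 : 0 < p x by rewrite lt_def px hp.
    by have [/(_ p0) q0 _] := hd x (q x) (hq x) (hqQ x); rewrite gt_eqF.
  rewrite suppq lte_fin.
  have : \sum_x (p x * (l0 (p x) - l0 (Q x)) - e) <= \sum_x p x * (l0 (p x) - l0 (q x)).
    by apply: ler_sum => x _; apply: ltW; case: (hd x (q x) (hq x) (hqQ x)).
  rewrite sumrB sumr_const card_ord -/S0 -mulr_natl.
  move=> H; apply: (lt_le_trans _ H).
  have : k%:R * e = S0 - a - e by rewrite -eE; ring.
  move=> ->; lra.
move=> _; move: suppQ => /negbT/forallPn [x0]; rewrite negb_imply negbK => /andP [px0 /eqP Qx0].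
have p0 : 0 < p x0 by rewrite lt_def px0 hp.
set L := \sum_(x | x != x0) (p x * l0 (p x) - p x * Q x).
set b := (p x0 * l0 (p x0) - a + L) / p x0.
exists (Num.min 1 (exp b)); first by rewrite lt_min ltr01 exp_gt0.
move=> q hq hqQ; case: ifP => [suppq|_]; last exact: ltry.
rewrite lte_fin.
rewrite (bigD1 x0) //=.
have hL : L <= \sum_(x | x != x0) p x * (l0 (p x) - l0 (q x)).
  apply: ler_sum => x _.
  have [->|pn0] := eqVneq (p x) 0; first by rewrite !mul0r subrr.
  have px : 0 < p x by rewrite lt_def pn0 hp.
  have qx : 0 < q x.
    by rewrite lt_def hq andbT; apply: (implyP (forallP suppq x)).
  have := hqQ x; rewrite lt_min => /andP [h1 _].
  move: h1; rewrite ltr_distl => /andP [_ h1].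
  have hl := ln_sub1 qx.
  rewrite mulrBr lerB // /l0 qx; apply: ler_wpM2l; first exact: ltW.
  lra.
have qx0 : 0 < q x0.
  by rewrite lt_def hq andbT; apply: (implyP (forallP suppq x0)).
have hb : ln (q x0) < b.
  have := hqQ x0; rewrite lt_min Qx0 subr0 gtr0_norm // => /andP [_ h].
  by rewrite -[b]ln_expR; apply: ln_lt.
have pb : p x0 * b = p x0 * l0 (p x0) - a + L by rewrite /b mulrC mulfVK ?gt_eqF.
have : p x0 * ln (q x0) < p x0 * b by rewrite ltr_pM2l.
have -> : l0 (q x0) = ln (q x0) by rewrite /l0 qx0.
rewrite mulrBr pb; lra.
Qed.

Lemma psdE n (A : 'M[C]_n) : psd A <-> (forall v, 0 <= qf A v v).
Proof. by split => h v; have := h v; rewrite /qf adjE. Qed.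

Lemma tr_psdC n (A B : 'M[C]_n) : psd A -> psd B -> 0 <= \tr (A *m B).
Proof. by move=> /psdE hA /psdE hB; apply: tr_psd. Qed.

Lemma ge0_ReC (z : C) : 0 <= z -> z = (complex.Re z)%:C.
Proof. by move=> /ger0_real /RRe_real ->. Qed.

Lemma meas_dg n k (M : 'I_k -> 'M[C]_n) (w : 'M[C]_n) :
  psd w -> (forall x, psd (M x)) ->
  meas_channel M w = dg (fun x => complex.Re (\tr (w *m M x))) /\
  (forall x, 0 <= complex.Re (\tr (w *m M x))).
Proof.
move=> hw hM; split.
  rewrite /meas_channel /dg; congr diag_mx; apply/rowP => x; rewrite !mxE.
  exact: ge0_ReC (tr_psdC hw (hM x)).
move=> x; have := tr_psdC hw (hM x).
by move=> /ge0_ReC h; move: (tr_psdC hw (hM x)); rewrite h lecR.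
Qed.

Lemma psd_cast m n (e : m = n) (B : 'M[C]_m) : psd B -> psd (castmx (e, e) B).
Proof. by case: n / e; rewrite castmx_id. Qed.

Section Chan.
Variables (n m : nat) (T : 'M[C]_n -> 'M[C]_m).
Hypothesis hT : is_channel T.

Lemma chan0 : T 0 = 0.
Proof.
case: hT => lin _ _; have := lin 1 0 0.
rewrite scale1r addr0 => /(congr1 (fun Z => Z - T 0)).
by rewrite subrr addrK scale1r => ->.
Qed.

Lemma chanD X Y : T (X + Y) = T X + T Y.
Proof. by case: hT => lin _ _; have := lin 1 X Y; rewrite !scale1r. Qed.

Lemma chanZ a X : T (a *: X) = a *: T X.
Proof. by case: hT => lin _ _; have := lin a X 0; rewrite !addr0 chan0 addr0. Qed.

Lemma chan_sum (I : finType) (F : I -> 'M[C]_n) : T (\sum_i F i) = \sum_i T (F i).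
Proof.
by apply: (big_morph T chanD chan0).
Qed.

Lemma chan_psd X : psd X -> psd (T X).
Proof.
case: hT => _ _ cp hX.
have hB : psd (\mxblock_(i < 1, j < 1) X).
  rewrite -[\mxblock_(i < 1, j < 1) X](castmxK (big_ord1 _ (fun=> n)) (big_ord1 _ (fun=> n))).
  rewrite -mxEmxblock; exact: psd_cast.
have := cp 1 (fun _ _ => X) hB.
move=> /(psd_cast (big_ord1 _ (fun=> m))).
by rewrite -mxEmxblock.
Qed.
End Chan.

Definition Wt n m (X : 'M[C]_n) (M : 'M[C]_m) : C :=
  \sum_a \sum_b (\sum_i \sum_j `|X i j|) * `|M b a|.

Lemma tr_est n m (T T0 : 'M[C]_n -> 'M[C]_m) (X : 'M[C]_n) (M : 'M[C]_m) (d : R) :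
  is_channel T -> is_channel T0 ->
  (forall i j k l, `|T (delta_mx i j) k l - T0 (delta_mx i j) k l| < d%:C) ->
  `|\tr (T X *m M) - \tr (T0 X *m M)| <= d%:C * Wt X M.
Proof.
move=> hT hT0 hd.
have YE : T X - T0 X = \sum_i \sum_j X i j *: (T (delta_mx i j) - T0 (delta_mx i j)).
  rewrite {1 2}[X]matrix_sum_delta (chan_sum hT) (chan_sum hT0) -sumrB.
  apply: eq_bigr => i _.
  rewrite (chan_sum hT) (chan_sum hT0) -sumrB; apply: eq_bigr => j _.
  by rewrite (chanZ hT) (chanZ hT0) scalerBr.
rewrite -linearB /= -mulmxBl YE /mxtrace /Wt mulr_sumr.
apply: (le_trans (ler_norm_sum _ _ _)); apply: ler_sum => a _.
rewrite mxE mulr_sumr.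
apply: (le_trans (ler_norm_sum _ _ _)); apply: ler_sum => b _.
rewrite normrM mulrA; apply: ler_wpM2r => //.
rewrite !summxE mulr_sumr.
apply: (le_trans (ler_norm_sum _ _ _)); apply: ler_sum => i _.
rewrite !summxE mulr_sumr.
apply: (le_trans (ler_norm_sum _ _ _)); apply: ler_sum => j _.
rewrite !mxE normrM mulrC; apply: ler_wpM2r => //.
exact: ltW.
Qed.

Lemma normC_real (r : R) : `|r%:C| = `|r|%:C.
Proof. by rewrite normc_def /= expr0n /= addr0 sqrtr_sqr. Qed.

Lemma glue1 (k c : R) (D : \bar R) : (k%:E - D < c%:E)%E -> ((k - c)%:E < D)%E.
Proof.
case: D => [r||] //=.
- by rewrite -EFinB !lte_fin => h; lra.
- by move=> _; apply: ltry.
Qed.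

Lemma glue2 (k c : R) (D : \bar R) : ((k - c)%:E < D)%E -> (k%:E - D < c%:E)%E.
Proof.
case: D => [r||] //=.
- by rewrite -EFinB !lte_fin => h; lra.
- by move=> _; apply: ltNyr.
Qed.

Lemma Wt_ge0 n m (X : 'M[C]_n) (M : 'M[C]_m) : 0 <= Wt X M.
Proof.
apply: sumr_ge0 => a _; apply: sumr_ge0 => b _; apply: mulr_ge0 => //.
by apply: sumr_ge0 => i _; apply: sumr_ge0.
Qed.

Theorem lemma7 (dA dB : nat) (sigma rho : 'M[C]_dA)
    (N : 'M[C]_dA -> 'M[C]_dB) :
  density sigma -> density rho -> supp_le rho sigma -> is_channel N ->
  usc_on_channels (fun T : 'M[C]_dB -> 'M[C]_dA => Delta T sigma N rho).
Proof.
move=> [hs _] [hr _] hsupp hN T0 hT0 c.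
rewrite /Delta.
have hK1 : relent rho sigma =
  (complex.Re (\tr (rho *m (log_mx rho - log_mx sigma))))%:E by rewrite /relent hsupp.
set r1 := complex.Re _ in hK1.
rewrite hK1.
case E2: (relent (N rho) (N sigma)) => [r2| |]; last first.
- by move: E2; rewrite /relent; case: ifP.
- move=> _; exists 1 => // T _ _.
  by case: (measured_relent rho (T (N rho))) => [r||] /=; apply: ltNyr.
rewrite -EFinB => /glue1 H.
have hNr := chan_psd hN hr.
move: H; rewrite /measured_relent => /ereal_sup_gt [y [k [M [hM ->]]]].
have hMp : forall x, psd (M x) by case: hM.
have [E1 hp] := meas_dg hr hMp.
have [E0 hQ] := meas_dg (chan_psd hT0 hNr) hMp.
rewrite E1 E0 relent_dg => /fcl_lsc [] // d1 d10 hd1.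
set w := fun x => complex.Re (Wt (N rho) (M x)).
have hw : forall x, Wt (N rho) (M x) = (w x)%:C by move=> x; apply: ge0_ReC; apply: Wt_ge0.
have w0 : forall x, 0 <= w x by move=> x; rewrite -lecR -hw Wt_ge0.
set W := \sum_x w x.
have W0 : 0 <= W by apply: sumr_ge0.
have W1 : 0 < 1 + W by rewrite ltr_pwDl.
exists (d1 / (1 + W)); first by apply: divr_gt0.
move=> T hT hclose.
apply: glue2.
have [E1' _] := meas_dg hr hMp.
have [E' hq] := meas_dg (chan_psd hT hNr) hMp.
apply: (lt_le_trans _ (ereal_sup_ubound _)); last first.
  by exists k, M; split; [exact: hM | reflexivity].
rewrite E1' E' relent_dg; apply: hd1 => // x.
have := tr_est (N rho) (M x) hT hT0 hclose.
rewrite hw -rmorphM /=.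
rewrite (ge0_ReC (tr_psdC (chan_psd hT hNr) (hMp x))).
rewrite (ge0_ReC (tr_psdC (chan_psd hT0 hNr) (hMp x))).
rewrite -rmorphB normC_real lecR => h.
apply: (le_lt_trans h).
have wW : w x <= W.
  rewrite /W (bigD1 x) //= lerDl; exact: sumr_ge0.
have dp : 0 < d1 / (1 + W) by apply: divr_gt0.
apply: (le_lt_trans (ler_wpM2l (ltW dp) wW)).
have hd : d1 / (1 + W) * (1 + W) = d1 by rewrite mulfVK ?gt_eqF.
rewrite -[X in _ < X]hd ltr_pM2l //; lra.
Qed.
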